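(* Let $k \geqslant 2$, $\ell \geqslant 0$, and let $A$ be as defined in the context. Then no string accepted by $A$ contains a factor (two consecutive symbols) of the form $a_i a_j$ with $j > i+1$.
   Context: A 2DFA $(\Sigma, Q, q_0, \delta, F)$: $\Sigma$ is a finite alphabet not containing end-markers $\vdash, \dashv$; $Q$ finite set of states; $q_0 \in Q$ initial; $\delta: Q \times (\Sigma \cup \{\vdash,\dashv\}) \to Q \times \{-1,+1\}$ partial; $F \subseteq Q$ accepting. On input $w = b_1\cdots b_m$ it works on tape $\vdash b_1 \cdots b_m \dashv$, starting at $\vdash$ in $q_0$; if $\delta(q,c)=(r,d)$ it enters $r$ and moves one cell in direction $d$; if undefined it rejects; it accepts if it ever arrives at $\dashv$ in a state of $F$; it may loop. Construction of $A$. Fix $k \geqslant 2$, $\ell \geqslant 0$, $Q^+ = \{1, \ldots, k\}$, $Q^- = \{1', \ldots, \ell'\}$, ordered by $i < j$ and $i' < j'$ iff $i < j$. A pair is $(P,R)$ with $P \subseteq Q^-$, $R \subseteq Q^+$, $|R| = |P|+1$. Writing $P = \{p_1 < \cdots < p_m\}$ and $R = \{r_1 < \cdots < r_{m+1}\}$, the sequence of the pair is the integer sequence $(r_1, -p_1, r_2, -p_2, \ldots, r_m, -p_m, r_{m+1})$, where a primed state $i'$ contributes the integer $i$ (so $-p_j$ for $p_j = i'$ is the integer $-i$). Pairs are ordered by the lexicographic order of their sequences (a proper prefix is smaller). Let $N = \binom{k+\ell}{\ell+1}$ be the number of pairs and enumerate them increasingly as $(P^{(1)},R^{(1)}) < \cdots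 < (P^{(N)},R^{(N)})$, with $P^{(i)} = \{p^{(i)}_1 < \cdots < p^{(i)}_{m_i}\}$ and $R^{(i)} = \{r^{(i)}_1 < \cdots < r^{(i)}_{m_i+1}\}$; in particular $(P^{(1)},R^{(1)}) = (\emptyset,\{1\})$ and $(P^{(N)},R^{(N)}) = (\emptyset,\{k\})$. The 2DFA $A$ has alphabet $\Sigma = \{a_1, \ldots, a_{N-1}\}$ (distinct symbols), states $Q = Q^+ \cup Q^-$, initial state $q_0 = 1$, accepting states $F = \{k\}$, and exactly the following transitions: $\delta(1, \vdash) = (r^{(1)}_1, +1)$; and for each $i \in \{1,\ldots,N-1\}$: $\delta(r^{(i)}_j, a_i) = (p^{(i)}_j, -1)$ for $j = 1, \ldots, m_i$; $\delta(r^{(i)}_{m_i+1}, a_i) = (r^{(i+1)}_1, +1)$; $\delta(p^{(i+1)}_j, a_i) = (r^{(i+1)}_{j+1}, +1)$ for $j = 1, \ldots, m_{i+1}$. No transitions are defined at $\dashv$. *)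

(* Defs.v *)
From mathcomp Require Import all_boot all_order all_algebra.
Set Implicit Arguments. Unset Strict Implicit. Unset Printing Implicit Defensive.
Import Order.TTheory GRing.Theory Num.Theory.

Inductive tsym := LEnd | REnd | Sym of nat.

Definition tsym_eqb (c d : tsym) : bool :=
  match c, d with
  | LEnd, LEnd => true
  | REnd, REnd => true
  | Sym a, Sym b => a == b
  | _, _ => false
  end.

Inductive dir := L | R.

Record dfa2 (Q : Type) := Dfa2 {
  delta : Q -> tsym -> option (Q * dir);
  q0 : Q;
  final : Q -> bool
}.

(* The tape |- b_1 ... b_m -| : cell 0 is |-, cells 1..m the input,
   cell m+1 is -|. *)
Definition tape (w : seq nat) (p : nat) : option tsym :=
  if p == 0 then Some LEnd
  else if p <= size w then Some (Sym (nth 0 w p.-1))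
  else if p == (size w).+1 then Some REnd
  else None.

Definition step Q (M : dfa2 Q) (w : seq nat) (c : Q * nat) : option (Q * nat) :=
  let: (q, p) := c in
  match tape w p with
  | None => None
  | Some a =>
      match delta M q a with
      | None => None
      | Some (r, R) => Some (r, p.+1)
      | Some (r, L) => if p is p'.+1 then Some (r, p') else None
      end
  end.

(* Configuration after n steps (None once the machine has halted/rejected). *)
Fixpoint run Q (M : dfa2 Q) (w : seq nat) (n : nat) : option (Q * nat) :=
  match n with
  | 0 => Some (q0 M, 0)
  | n'.+1 => obind (step M w) (run M w n')
  end.

Definition accepts Q (M : dfa2 Q) (w : seq nat) : Prop :=
  exists n q, run M w n = Some (q, (size w).+1) /\ final M q.

(* States: (true, i) is i in Q^+, (false, i) is i' in Q^-. *)
Definition state := (bool * nat)%type.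
Definition Plus (i : nat) : state := (true, i).
Definition Minus (i : nat) : state := (false, i).

(* All subsequences of s (for s increasing: all subsets, as increasing lists). *)
Fixpoint sublists (s : seq nat) : seq (seq nat) :=
  match s with
  | [::] => [:: [::]]
  | x :: s' => [seq x :: t | t <- sublists s'] ++ sublists s'
  end.

(* A pair (P,R): P subset of Q^- (as increasing list of indices), R subset of
   Q^+ (increasing list), |R| = |P| + 1. *)
Definition pairs (k l : nat) : seq (seq nat * seq nat) :=
  [seq (P, Rr) | P <- sublists (iota 1 l),
                 Rr <- [seq Rr <- sublists (iota 1 k) | size Rr == (size P).+1]].

Local Open Scope ring_scope.
Fixpoint interleave (Rr P : seq nat) : seq int :=
  match Rr, P with
  | r :: Rr', p :: P' => (r%:Z) :: (- (p%:Z)) :: interleave Rr' P'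
  | r :: _, [::] => [:: r%:Z]
  | [::], _ => [::]
  end.
Definition seq_of_pair (pr : seq nat * seq nat) : seq int := interleave pr.2 pr.1.

Fixpoint lexlt (s t : seq int) : bool :=
  match s, t with
  | [::], _ :: _ => true
  | _, [::] => false
  | x :: s', y :: t' => (x < y)%R || ((x == y) && lexlt s' t')
  end.
Definition lexle (s t : seq int) : bool := (s == t) || lexlt s t.
Local Close Scope ring_scope.

Definition sorted_pairs (k l : nat) : seq (seq nat * seq nat) :=
  sort (fun a b => lexle (seq_of_pair a) (seq_of_pair b)) (pairs k l).

Definition Npairs (k l : nat) : nat := size (pairs k l).

(* The i-th pair (1-based), its P^{(i)}, R^{(i)}, m_i, p^{(i)}_j, r^{(i)}_j. *)
Definition pair_i (k l i : nat) := nth ([::], [::]) (sorted_pairs k l) i.-1.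
Definition Pi (k l i : nat) := (pair_i k l i).1.
Definition Ri (k l i : nat) := (pair_i k l i).2.
Definition mi (k l i : nat) := size (Pi k l i).
Definition pij (k l i j : nat) := nth 0 (Pi k l i) j.-1.
Definition rij (k l i j : nat) := nth 0 (Ri k l i) j.-1.

(* Transition rules (q, c, r, d) meaning delta(q, c) = (r, d). *)
Definition rules (k l : nat) : seq (state * tsym * state * dir) :=
  ((Plus 1, LEnd), Plus (rij k l 1 1), R) ::
  flatten [seq
     [seq ((Plus (rij k l i j), Sym i), Minus (pij k l i j), L) | j <- iota 1 (mi k l i)]
  ++ [:: ((Plus (rij k l i (mi k l i).+1), Sym i), Plus (rij k l i.+1 1), R)]
  ++ [seq ((Minus (pij k l i.+1 j), Sym i), Plus (rij k l i.+1 j.+1), R)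
         | j <- iota 1 (mi k l i.+1)]
  | i <- iota 1 (Npairs k l).-1].

(* delta looks up the (unique, by the paper's construction) matching rule. *)
Definition deltaA (k l : nat) (q : state) (c : tsym) : option (state * dir) :=
  let ms := [seq (x.1.2, x.2) | x <- rules k l & (x.1.1.1 == q) && tsym_eqb x.1.1.2 c] in
  if ms is y :: _ then Some y else None.

Definition A (k l : nat) : dfa2 state :=
  @Dfa2 state (deltaA k l) (Plus 1) (fun q => q == Plus k).

(* Main.v *)
Require Import Defs.
From mathcomp Require Import all_boot all_order all_algebra zify.
Set Implicit Arguments. Unset Strict Implicit. Unset Printing Implicit Defensive.

Module LexM.
Import Order.TTheory GRing.Theory Num.Theory.

Lemma lexlt_irr s : ~~ lexlt s s.
Proof. elim: s => //= x s IH; by rewrite ltxx eqxx. Qed.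

Lemma lexlt_trans s t u : lexlt s t -> lexlt t u -> lexlt s u.
Proof.
elim: s t u => [|x s IH] [|y t] [|z u] //=.
case/orP=> [h1|/andP[/eqP-> h1]]; case/orP=> [h2|/andP[/eqP<- h2]].
- by rewrite (lt_trans h1 h2).
- by rewrite h1.
- by rewrite h2.
- by rewrite (IH _ _ h1 h2) eqxx orbT.
Qed.

Lemma lexlt_total s t : s != t -> lexlt s t || lexlt t s.
Proof.
elim: s t => [|x s IH] [|y t] //= hne.
case: (ltgtP x y) => //= exy.
apply: IH; apply: contra hne => /eqP ->; by rewrite exy.
Qed.

Lemma lexlt_asym s t : lexlt s t -> ~~ lexlt t s.
Proof. move=> h; apply/negP=> h'; by have := lexlt_irr s; rewrite (lexlt_trans h h'). Qed.

Lemma lexle_trans : transitive lexle.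
Proof.
move=> t s u; rewrite /lexle => /orP[/eqP->//|h1] /orP[/eqP<-|h2]; first by rewrite h1 orbT.
by rewrite (lexlt_trans h1 h2) orbT.
Qed.

Lemma lexle_total : total lexle.
Proof.
move=> s t; rewrite /lexle; case: (eqVneq s t) => [->|ne]; first by apply/orP; left; apply/orP; left.
rewrite /=; exact: lexlt_total.
Qed.

Lemma lexle_cons x s y t : lexle (x :: s) (y :: t) -> (x <= y)%R.
Proof.
rewrite /lexle /= => /orP[/eqP[-> _]//|/orP[/ltW//|/andP[/eqP-> _]//]].
Qed.

Lemma lexle_cons_eq x s t : lexle (x :: s) (x :: t) = lexle s t.
Proof. by rewrite /lexle /= eqseq_cons eqxx ltxx. Qed.

Definition good (R' P' R P : seq nat) t :=
  [&& t <= size P', t <= size P, take t R' == take t R & take t P' == take t P].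

Lemma interleave_head a X Y : exists rest, interleave (a :: X) Y = Posz a :: rest.
Proof. by case: Y => [|p Y]; eexists. Qed.

Lemma lexle_drop t R' P' R P : good R' P' R P t ->
  size R = (size P).+1 -> size R' = (size P').+1 ->
  lexle (interleave R' P') (interleave R P) ->
  lexle (interleave (drop t R') (drop t P')) (interleave (drop t R) (drop t P)).
Proof.
elim: t R' P' R P => [|t IH] R' P' R P; first by rewrite !drop0.
case: R' => [|r' R'] //; case: P' => [|p' P'] //; case: R => [|r R] //;
  case: P => [|p P] //; rewrite /good /= !ltnS ?andbF // !eqseq_cons.
case/and4P=> h1 h2 /andP[/eqP e1 e2] /andP[/eqP e3 e4] [s1] [s2]; subst.
rewrite !lexle_cons_eq => h; apply: IH => //; by rewrite /good h1 h2 e2 e4.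
Qed.

Lemma sorted_nth_lt (s : seq nat) i j : sorted ltn s -> i < j -> j < size s ->
  nth 0 s i < nth 0 s j.
Proof.
move=> ss ij js; apply: (sorted_ltn_nth ltn_trans 0 ss) => //.
by rewrite inE (ltn_trans ij js).
Qed.

Lemma C1 R' P' R P t s :
  sorted ltn R' -> sorted ltn R -> size R = (size P).+1 -> size R' = (size P').+1 ->
  lexle (interleave R' P') (interleave R P) ->
  good R' P' R P t -> s < size R -> nth 0 R' t = nth 0 R s -> s = t.
Proof.
move=> sR' sR zR zR' lex g sz e.
have g' := g; move: g'; rewrite /good => /and4P[h1 h2 /eqP e1 /eqP e2].
case: (ltngtP s t) => // st.
- have : nth 0 R s = nth 0 R' s by rewrite -(nth_take 0 st) -e1 nth_take.
  move=> e'; have := sorted_nth_lt sR' st; rewrite zR' ltnS => /(_ h1).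
  by rewrite e e' ltnn.
- have := lexle_drop g zR zR' lex.
  rewrite (drop_nth 0 (s := R')) ?zR' ?ltnS // (drop_nth 0 (s := R)) ?zR ?ltnS //.
  case: (interleave_head (nth 0 R' t) (drop t.+1 R') (drop t P')) => x1 ->.
  case: (interleave_head (nth 0 R t) (drop t.+1 R) (drop t P)) => x2 ->.
  move/lexle_cons; rewrite lez_nat e.
  by have := sorted_nth_lt sR st sz; case: ltnP.
Qed.

Lemma C2 R' P' R P t :
  size R = (size P).+1 -> size R' = (size P').+1 ->
  lexle (interleave R' P') (interleave R P) -> ~ (R' = R /\ P' = P) ->
  good R' P' R P t -> t = size P -> nth 0 R' t = nth 0 R t -> False.
Proof.
move=> zR zR' lex neq g tP e.
have g' := g; move: g'; rewrite /good => /and4P[h1 h2 /eqP e1 /eqP e2].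
have := lexle_drop g zR zR' lex.
rewrite (drop_nth 0 (s := R')) ?zR' ?ltnS // (drop_nth 0 (s := R)) ?zR ?ltnS -?tP //.
have -> : drop t.+1 R = [::] by apply: drop_oversize; rewrite zR tP.
have -> : drop t P = [::] by apply: drop_oversize; rewrite tP.
case eP' : (drop t P') => [|p Y].
- move=> _; apply: neq.
  have sP' : size P' = t.
    by move/(congr1 size): eP'; rewrite size_drop /= => /eqP; rewrite subn_eq0; lia.
  split.
  + rewrite -(cat_take_drop t R') -(cat_take_drop t R) e1.
    rewrite (drop_nth 0 (s := R')) ?zR' ?ltnS ?sP' // (drop_nth 0 (s := R)) ?zR ?ltnS -?tP //.
    rewrite e; congr (_ ++ _ :: _).
    by rewrite !drop_oversize // ?zR ?zR' ?sP' ?tP.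
  + by rewrite -(cat_take_drop t P') -(cat_take_drop t P) e2 eP' drop_oversize ?tP.
- rewrite e /=.
  by rewrite /lexle /= ltxx andbF eqseq_cons andbF.
Qed.

Lemma C3 R' P' R P t u :
  sorted ltn P' -> sorted ltn P -> size R = (size P).+1 -> size R' = (size P').+1 ->
  lexle (interleave R' P') (interleave R P) ->
  good R' P' R P t -> t < size P -> u < size P' -> nth 0 P t = nth 0 P' u ->
  nth 0 R' t = nth 0 R t -> u = t /\ good R' P' R P t.+1.
Proof.
move=> sP' sP zR zR' lex g tP uP e eR.
have g' := g; move: g'; rewrite /good => /and4P[h1 h2 /eqP e1 /eqP e2].
have ut : u = t.
  case: (ltngtP u t) => // ut.
  - have : nth 0 P u = nth 0 P' u by rewrite -(nth_take 0 ut) -e2 nth_take.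
    move=> e'; have := sorted_nth_lt sP ut tP.
    by rewrite e e' ltnn.
  - have tP' : t < size P' by apply: ltn_trans uP.
    have := lexle_drop g zR zR' lex.
    rewrite (drop_nth 0 (s := R')) ?zR' ?ltnS // (drop_nth 0 (s := R)) ?zR ?ltnS //.
    rewrite (drop_nth 0 (s := P')) // (drop_nth 0 (s := P)) //= eR lexle_cons_eq.
    move/lexle_cons; rewrite lerN2 lez_nat e.
    by have := sorted_nth_lt sP' ut uP; case: ltnP.
subst u; split => //.
have tP' : t < size P' by [].
by rewrite /good tP tP' !(take_nth 0) ?zR ?zR' ?ltnS // e1 e2 eR e !eqxx.
Qed.

Lemma sublists_sub s t : t \in sublists s -> subseq t s.
Proof.
elim: s t => [|x s IH] t /=; first by rewrite inE => /eqP->.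
rewrite mem_cat => /orP[/mapP[u /IH h ->]|/IH h]; first by rewrite /= eqxx.
exact: (subseq_trans h (subseq_cons s x)).
Qed.

Lemma uniq_sublists s : uniq s -> uniq (sublists s).
Proof.
elim: s => [|x s IH] //= /andP[xs us].
rewrite cat_uniq map_inj_uniq ?IH //; last by move=> a b [].
rewrite andbT; apply/hasPn => t /sublists_sub st; apply/mapP => -[u _ tu].
by move: st; rewrite tu => /mem_subseq /(_ x); rewrite inE eqxx (negbTE xs) => /(_ isT).
Qed.

Lemma sorted_sublists a n t : t \in sublists (iota a n) -> sorted ltn t.
Proof. move/sublists_sub => h; exact: (subseq_sorted ltn_trans h (iota_ltn_sorted a n)). Qed.

Lemma pairs_prop k l x : x \in pairs k l ->
  [/\ sorted ltn x.1, sorted ltn x.2 & size x.2 = (size x.1).+1].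
Proof.
case/allpairsPdep => P [Rr [hP]]; rewrite mem_filter => /andP[/eqP hs hR] ->.
split => //=; [exact: sorted_sublists hP | exact: sorted_sublists hR].
Qed.

Lemma uniq_pairs k l : uniq (pairs k l).
Proof.
apply: allpairs_uniq_dep; first exact/uniq_sublists/iota_uniq.
  move=> P _; apply: filter_uniq; exact/uniq_sublists/iota_uniq.
move=> [a b] [c d] _ _ /= [-> ->] //.
Qed.

Definition pleT (a b : seq nat * seq nat) := lexle (seq_of_pair a) (seq_of_pair b).

Lemma pair_facts k l i1 i2 : 1 <= i1 -> i1 < i2 -> i2 <= Npairs k l ->
  sorted ltn (Pi k l i1) /\ sorted ltn (Ri k l i1) /\
      size (Ri k l i1) = (size (Pi k l i1)).+1 /\
      sorted ltn (Pi k l i2) /\ sorted ltn (Ri k l i2) /\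
      size (Ri k l i2) = (size (Pi k l i2)).+1 /\
      lexle (interleave (Ri k l i1) (Pi k l i1)) (interleave (Ri k l i2) (Pi k l i2))
    /\ ~ (Ri k l i1 = Ri k l i2 /\ Pi k l i1 = Pi k l i2).
Proof.
move=> h1 h12 h2.
have sz : size (sorted_pairs k l) = Npairs k l by rewrite size_sort.
have i1s : i1.-1 < size (sorted_pairs k l) by rewrite sz; lia.
have i2s : i2.-1 < size (sorted_pairs k l) by rewrite sz; lia.
have mem i : i.-1 < size (sorted_pairs k l) -> pair_i k l i \in pairs k l.
  by move=> hi; rewrite /pair_i -(mem_sort (fun a b => lexle (seq_of_pair a) (seq_of_pair b))) mem_nth.
have [a1 b1 c1] := pairs_prop (mem _ i1s).
have [a2 b2 c2] := pairs_prop (mem _ i2s).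
have uq : uniq (sorted_pairs k l) by rewrite /sorted_pairs sort_uniq uniq_pairs.
have so : sorted pleT (sorted_pairs k l).
  apply: sort_sorted => a b; exact: lexle_total.
do 6 (split; first by []). split.
- have := sorted_ltn_nth (leT := pleT) _ ([::], [::]) so.
  move=> /(_ _ i1.-1 i2.-1 i1s i2s).
  apply; first by move=> x y z; exact: lexle_trans.
  lia.
- case=> e1 e2; have : pair_i k l i1 = pair_i k l i2.
    by rewrite [pair_i k l i1]surjective_pairing [pair_i k l i2]surjective_pairing -/(Pi k l i1) -/(Ri k l i1) e1 e2.
  rewrite /pair_i => /eqP; rewrite nth_uniq //; lia.
Qed.
End LexM.
Import LexM.

Lemma ms_head (X Y : Type) (s : seq X) (p : pred X) (f : X -> Y) y ys :
  [seq f x | x <- s & p x] = y :: ys -> exists x, List.In x s /\ p x /\ y = f x.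
Proof.
elim: s => [|x s IH] //=; case px: (p x) => /=.
- case=> <- _; exists x; by split; [left|].
- move/IH => [z [h1 h2]]; exists z; by split; [right|].
Qed.

Lemma In_iota j a n : List.In j (iota a n) -> a <= j < a + n.
Proof.
elim: n a => [|n IH] a //= [->|/IH]; first lia. lia.
Qed.

Lemma In_flatten_map (X Y : Type) (g : X -> seq Y) s y :
  List.In y (flatten (map g s)) -> exists x, List.In x s /\ List.In y (g x).
Proof.
elim: s => [|x s IH] //=; rewrite List.in_app_iff => -[h|/IH [z [h1 h2]]].
- by exists x; split; [left|].
- by exists z; split; [right|].
Qed.

Lemma In_rules k l x : List.In x (rules k l) ->
  x = ((Plus 1, LEnd), Plus (rij k l 1 1), R) \/
  exists i, 1 <= i <= (Npairs k l).-1 /\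
   ((exists j, 1 <= j <= mi k l i /\ x = ((Plus (rij k l i j), Sym i), Minus (pij k l i j), L))
    \/ x = ((Plus (rij k l i (mi k l i).+1), Sym i), Plus (rij k l i.+1 1), R)
    \/ (exists j, 1 <= j <= mi k l i.+1 /\
          x = ((Minus (pij k l i.+1 j), Sym i), Plus (rij k l i.+1 j.+1), R))).
Proof.
move=> H; rewrite /rules in H; case: H => [<-|]; first by left.
move=> H; have [i [/In_iota hi H2]] := In_flatten_map H; right; exists i; split; first lia.
move: H2; rewrite !List.in_app_iff => -[H3|[H3|H3]]; move: H3.
- move/List.in_map_iff => [j [<- /In_iota hj]]; left; exists j; split => //; lia.
- by move=> H3; right; left; rewrite -H3.
- move/List.in_map_iff => [j [<- /In_iota hj]]; right; right; exists j; split => //; lia.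
Qed.

Lemma delta_spec k l q c v : deltaA k l q c = Some v ->
  exists x, List.In x (rules k l) /\ x.1.1.1 = q /\ tsym_eqb x.1.1.2 c /\ v = (x.1.2, x.2).
Proof.
rewrite /deltaA; case E: [seq _ | _ <- _ & _] => [|y ys] //= [<-].
have [x [h1 [/andP [/eqP h2 h3] h4]]] := ms_head E.
by exists x.
Qed.

Lemma delta_LEnd k l q v : deltaA k l q LEnd = Some v -> exists r, v = (Plus r, R).
Proof.
move/delta_spec => [x [/In_rules [->|[i [_ [[j [_ ->]]|[->|[j [_ ->]]]]]]] [_ [//= h ->]]]].
by eexists.
Qed.

Lemma delta_SymR k l q a r : deltaA k l q (Sym a) = Some (r, R) ->
  1 <= a <= (Npairs k l).-1 /\
  ((q = Plus (rij k l a (mi k l a).+1) /\ r = Plus (rij k l a.+1 1)) \/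
   exists u, 1 <= u <= mi k l a.+1 /\ q = Minus (pij k l a.+1 u) /\ r = Plus (rij k l a.+1 u.+1)).
Proof.
move/delta_spec => [x [/In_rules [->|[i [hi [[j [_ ->]]|[->|[j [hj ->]]]]]]] [/= h1 [h2 h3]]]] //.
- move: h2 => /eqP <-; case: h3 => ->; subst q; split => //; by left.
- move: h2 => /eqP <-; case: h3 => ->; subst q; split => //; right; by exists j.
Qed.

Lemma delta_SymL k l q a r : deltaA k l q (Sym a) = Some (r, L) ->
  exists s, 1 <= s <= mi k l a /\ q = Plus (rij k l a s) /\ r = Minus (pij k l a s).
Proof.
move/delta_spec => [x [/In_rules [->|[i [hi [[j [hj ->]]|[->|[j [hj ->]]]]]]] [/= h1 [h2 h3]]]] //;
  try by case: h3.
move: h2 => /eqP <-; case: h3 => ->; subst q; by exists j.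
Qed.

Lemma step_spec k l w q p q' p' : step (A k l) w (q, p) = Some (q', p') ->
  exists c0 d, tape w p = Some c0 /\ deltaA k l q c0 = Some (q', d) /\
    ((d = R /\ p' = p.+1) \/ (d = L /\ p = p'.+1)).
Proof.
rewrite /step; case: (tape w p) => [c0|] //; case E: (delta (A k l) q c0) => [[r d]|] //.
case: d E => E.
- case: p => [|p] // [<- <-]; exists c0, L; split => //; split => //; by right.
- case=> <- <-; exists c0, R; split => //; split => //; by left.
Qed.

Lemma tape_Sym w p : 0 < p <= size w -> tape w p = Some (Sym (nth 0 w p.-1)).
Proof. rewrite /tape; case: p => [|p] //= h; by rewrite h. Qed.

Definition Inv (c : nat) (R' P' R P : seq nat) (cfg : state * nat) : Prop :=
  let: (q, p) := cfg in
  p <= c.+1 /\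
  (p = c.+1 -> exists u, good R' P' R P u /\ q = Plus (nth 0 R' u)) /\
  (p = c -> (exists x, q = Plus x) \/
     exists u, [/\ good R' P' R P u, u < size P, nth 0 R' u = nth 0 R u & q = Minus (nth 0 P u)]).

Lemma PlusI x y : Plus x = Plus y -> x = y. Proof. by case. Qed.
Lemma MinusI x y : Minus x = Minus y -> x = y. Proof. by case. Qed.
Lemma PM x y : Plus x = Minus y -> False. Proof. by []. Qed.

Theorem mainTheorem7 (k l : nat) : 2 <= k ->
  forall w : seq nat,
    all (fun a => (1 <= a) && (a <= (Npairs k l).-1)) w ->
    accepts (A k l) w ->
    forall t : nat, t.+1 < size w -> ~ (nth 0 w t).+1 < nth 0 w t.+1.
Proof.
move=> hk w hw [n [qf [hrun _]]] t ht hlt.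
set I := nth 0 w t in hlt; set J := nth 0 w t.+1 in hlt.
have hI : 1 <= I <= (Npairs k l).-1.
  by have := allP hw I (mem_nth 0 (ltnW ht)).
have hJ : 1 <= J <= (Npairs k l).-1 by have := allP hw J (mem_nth 0 ht).
have [sP' [sR' [zR' [sP [sR [zR [lex neq]]]]]]] :=
  @pair_facts k l I.+1 J (ltn0Sn _) hlt ltac:(lia).
set R' := Ri k l I.+1 in sR' zR' lex neq.
set P' := Pi k l I.+1 in sP' zR' lex neq.
set R0 := Ri k l J in sR zR lex neq.
set P0 := Pi k l J in sP zR lex neq.
pose c := t.+1.
have cw : c.+1 <= size w by [].
have tapeI : tape w c = Some (Sym I) by rewrite tape_Sym //; lia.
have tapeJ : tape w c.+1 = Some (Sym J) by rewrite tape_Sym //; lia.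
have stepI : forall q p q' p', Inv c R' P' R0 P0 (q, p) ->
    step (A k l) w (q, p) = Some (q', p') -> Inv c R' P' R0 P0 (q', p').
  move=> q p q' p' [hp [hc1 hc]] /step_spec [c0 [d [htape [hdel hd]]]].
  case: p hp hc1 hc htape hdel hd => [|p0] hp hc1 hc htape hdel hd.
  - move: htape => [<-] in hdel; have [r [e1 e2]] := delta_LEnd hdel.
    subst q'; case: hd => [[_ ->]|[_ //]].
    split; first lia. split; first lia. by move=> _; left; exists r.
  have hsym : c0 = Sym (nth 0 w p0).
    by move: htape; rewrite tape_Sym //= ?ltnS; [case | lia].
  subst c0.
  case: d hdel hd => hdel hd.
  +
    have [s [hs [eq eq']]] := delta_SymL hdel.
    case: hd => [[//]|[_ [e]]]; subst p0.
    case: (ltngtP p'.+1 c.+1) => hpc; [|lia|].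
    * split; first lia. split; [lia | lia].
    * have pc : p' = c by lia. subst p'.
      have eJ : nth 0 w c = J by [].
      rewrite eJ in eq eq'.
      have [u [gu qu]] := hc1 erefl.
      rewrite qu in eq; move/PlusI: eq => eq.
      have hsP : s.-1 < size R0 by rewrite zR; rewrite /mi -/P0 in hs; lia.
      have us := C1 sR' sR zR zR' lex gu hsP eq.
      split; first lia. split; first lia. move=> _; right; exists u.
      rewrite /mi -/P0 in hs. split => //; first lia.
      * by rewrite eq /rij -/R0 us.
      * by rewrite eq' /pij -/P0 us.
  +
    have [ha hcase] := delta_SymR hdel.
    case: hd => [[_ e]|[//]]; subst p'.
    case: (ltngtP p0.+1 c) => hpc.
    * split; first lia. split; first lia. move=> _; left.
      by case: hcase => [[_ ->]|[u [_ [_ ->]]]]; eexists.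
    *
      have pc : p0 = c by lia. subst p0.
      have eJ : nth 0 w c = J by [].
      rewrite eJ in hcase.
      have [u [gu qu]] := hc1 erefl.
      case: hcase => [[e1 e2]|[u' [_ [e1 _]]]]; last by rewrite qu in e1.
      rewrite qu in e1; move/PlusI: e1 => e1.
      have hsP : size P0 < size R0 by rewrite zR.
      have us := C1 sR' sR zR zR' lex gu hsP e1.
      exfalso; apply: (C2 zR zR' lex neq gu (esym us)).
      by rewrite e1 -us.
    *
      have pc : p0 = t by lia. subst p0.
      rewrite -/I in hcase.
      have [hq|[u [gu hu eu qu]]] := hc erefl.
      -- case: hcase => [[_ ->]|[u' [_ [e1 _]]]]; last by case: hq => x; rewrite e1.
        split => //. split; last by move=> hh; exfalso; rewrite /c in hh; lia.
        move=> _; exists 0; split => //.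
        by rewrite /good /= !take0 eqxx.
      -- case: hcase => [[e1 _]|[u' [hu' [e1 ->]]]]; first by rewrite qu in e1.
        rewrite qu in e1; move/MinusI: e1 => e1.
        rewrite /mi -/P' in hu'.
        have hu'' : u'.-1 < size P' by lia.
        have [uu gu1] := C3 sP' sP zR zR' lex gu hu hu'' e1 eu.
        split => //. split; last by move=> hh; exfalso; rewrite /c in hh; lia.
        move=> _; exists u.+1; split => //.
        by rewrite /rij -/R' -uu; congr (Plus (nth _ _ _)); lia.
have inv : forall m cfg, run (A k l) w m = Some cfg -> Inv c R' P' R0 P0 cfg.
  elim=> [|m IH] [q p] /=.
  - case=> _ <-; split; first lia. split; move=> hh; exfalso; rewrite /c in hh; lia.
  - case E: (run (A k l) w m) => [[q0 p0]|] //= hs.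
    exact: stepI (IH _ E) hs.
have [hh _] := inv _ _ hrun.
rewrite /c in hh; lia.
Qed.
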